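(* Let $\varepsilon>0$ and let $R_1,\dots,R_n:[d]\to\mathcal Y$ be $\varepsilon$-private randomizers with $\mathcal Y$ finite and $d$ even, and let $|\vec R|_{\neq}$ be the number of distinct randomizers among $R_1,\dots,R_n$. Suppose $d>4(e^{2\varepsilon}-1)^2\ln(12|\mathcal Y|\cdot|\vec R|_{\neq})$. If $H$ is chosen uniformly at random among subsets of $[d]$ of size $d/2$, then with probability at least $5/6$ over $H$: for every $y\in\mathcal Y$ and every $i\in[n]$, $y$ is not $\left((e^{2\varepsilon}-1)\sqrt{\frac4d\ln(12|\mathcal Y|\cdot|\vec R|_{\neq})}\right)$-leaky with respect to $H,R_i$.
   Context: A randomizer $R:[d]\to\mathcal Y$ is a randomized map into a message set $\mathcal Y$; it is $\varepsilon$-private if for all $x,x'\in[d]$ and all $Y\subseteq\mathcal Y$, $\Pr[R(x)\in Y]\le e^{\varepsilon}\Pr[R(x')\in Y]$. $\mathbf U$ is the uniform distribution on $[d]$; for $H\subseteq[d]$, $\mathbf U_H$ is the uniform distribution on $H$; $R(\mathbf U)$ (resp. $R(\mathbf U_H)$) is the distribution of $R(\hat x)$ where $\hat x\sim\mathbf U$ (resp. $\hat x\sim \mathbf U_H$). For $H\subset[d]$ with $|H|=d/2$, a message $y$ is $v$-leaky with respect to $H,R$ if $\left|\ln\frac{\Pr[R(\mathbf U_H)=y]}{\Pr[R(\mathbf U)=y]}\right|>v$ (messages with $\Pr[R(\mathbf U)=y]=0$ are regarded as not leaky). *)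

(* Defs.v *)
From Stdlib Require Import Reals ClassicalEpsilon.
From mathcomp Require Import all_boot.
Local Open Scope R_scope.
Set Implicit Arguments. Unset Strict Implicit. Unset Printing Implicit Defensive.

Definition asbool (P : Prop) : bool :=
  if excluded_middle_informative P then true else false.

(* A randomizer [d] -> Y, given by its probability mass function:
   Rz x y = Pr[R(x) = y]. *)
Definition randomizer (d : nat) (Y : finType) := 'I_d -> Y -> R.

Definition is_randomizer (d : nat) (Y : finType) (Rz : randomizer d Y) : Prop :=
  (forall x y, (0 <= Rz x y)) /\
  (forall x, \big[Rplus/R0]_(y : Y) Rz x y = R1).

Definition prob_in (d : nat) (Y : finType) (Rz : randomizer d Y) (x : 'I_d)
  (S : {set Y}) : R := \big[Rplus/R0]_(y in S) Rz x y.

Definition eps_private (eps : R) (d : nat) (Y : finType) (Rz : randomizer d Y) : Prop :=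
  forall (x x' : 'I_d) (S : {set Y}),
    (prob_in Rz x S <= exp eps * prob_in Rz x' S).

(* Pr[R(U) = y], U uniform on [d] *)
Definition prob_U (d : nat) (Y : finType) (Rz : randomizer d Y) (y : Y) : R :=
  (/ INR d * \big[Rplus/R0]_(x : 'I_d) Rz x y).

(* Pr[R(U_H) = y], U_H uniform on H *)
Definition prob_UH (d : nat) (Y : finType) (Rz : randomizer d Y) (H : {set 'I_d})
  (y : Y) : R :=
  (/ INR #|H| * \big[Rplus/R0]_(x in H) Rz x y).

(* y is v-leaky w.r.t. H, R (messages with Pr[R(U)=y] = 0 are not leaky) *)
Definition leaky (v : R) (d : nat) (Y : finType) (Rz : randomizer d Y)
  (H : {set 'I_d}) (y : Y) : Prop :=
  prob_U Rz y <> R0 /\ (Rabs (ln (prob_UH Rz H y / prob_U Rz y)) > v).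

(* number of distinct randomizers among Rs 0, ..., Rs (n-1):
   indices i such that no earlier j has Rs j = Rs i *)
Definition num_distinct (n d : nat) (Y : finType) (Rs : 'I_n -> randomizer d Y) : nat :=
  #|[set i : 'I_n | [forall j : 'I_n, (j < i)%N ==> ~~ asbool (Rs j = Rs i)]]|.

Definition prob_half_subsets (d : nat) (P : {set 'I_d} -> Prop) : R :=
  (INR #|[set H : {set 'I_d} | (#|H| == d./2)%N && asbool (P H)]|
   / INR #|[set H : {set 'I_d} | (#|H| == d./2)%N]|).

(* Main.v *)
Require Import Defs.
From HB Require Import structures.
From Stdlib Require Import Reals Lra Lia Psatz ClassicalEpsilon Classical.
From Coquelicot Require Import Coquelicot.
From mathcomp Require Import all_boot zify.
Local Open Scope R_scope.
Lemma exp_le (x y : R) : x <= y -> exp x <= exp y.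
Proof. move=> H; case: (Rle_lt_or_eq_dec _ _ H) => [h|->]; [left; exact: exp_increasing | lra]. Qed.

Lemma mono0 (f df : R -> R) :
  (forall x, 0 <= x -> is_derive f x (df x)) -> (forall x, 0 <= x -> 0 <= df x) ->
  forall y, 0 <= y -> f 0 <= f y.
Proof.
move=> Hd Hp y Hy.
destruct (MVT_gen f 0 y df) as [c [Hc Heq]].
- move=> x; rewrite Rmin_left // Rmax_right // => Hx. apply Hd; lra.
- move=> x; rewrite Rmin_left // Rmax_right // => Hx.
  apply continuity_pt_filterlim. apply: ex_derive_continuous. exists (df x). apply Hd; lra.
- rewrite Rmin_left // Rmax_right // in Hc.
  have := Hp c (proj1 Hc). nra.
Qed.

Lemma cosh_le (y : R) : 0 <= y -> (exp y + exp (- y)) / 2 <= exp (y ^ 2).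
Proof.
move=> Hy.
set g := fun t => 2 * t * exp (t ^ 2) - (exp t - exp (- t)) / 2.
have Hg : forall t, 0 <= t -> 0 <= g t.
  move=> t Ht. have -> : 0 = g 0 by rewrite /g Ropp_0; field.
  apply: (mono0 g (fun t => (2 + 4 * t^2) * exp (t ^ 2) - (exp t + exp (- t)) / 2)) => // x Hx.
  - rewrite /g. auto_derive => //. replace (x * (x * 1)) with (x ^ 2) by ring. set E := exp (x ^ 2). set A := exp x. set B := exp (- x). lra.
  - have h1 := exp_ineq1_le (x ^ 2 - x).
    have h2 : exp (x^2 - x) * exp x = exp (x ^ 2) by rewrite -exp_plus; f_equal; ring.
    have h3 : exp (- x) <= exp x by apply: exp_le; lra.
    have h4 := exp_pos x. have h5 := exp_pos (x^2).
    have h6 : 1/2 <= exp (x^2 - x) by nra.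
    have h7 : exp x <= 2 * exp (x ^ 2) by rewrite -h2; nra.
    have h8 : 0 <= 4 * x^2 * exp (x^2) by apply: Rmult_le_pos; [nra|lra].
    lra.
set f := fun t => exp (t ^ 2) - (exp t + exp (- t)) / 2.
have : f 0 <= f y.
  apply: (mono0 f g) => // x Hx.
  rewrite /f /g. auto_derive => //. replace (x * (x * 1)) with (x ^ 2) by ring. set E := exp (x ^ 2). set A := exp x. set B := exp (- x). lra.
rewrite /f. have -> : 0 ^ 2 = 0 by ring. rewrite Ropp_0 exp_0. lra.
Qed.
HB.instance Definition _ := Monoid.isComLaw.Build R R0 Rplus (fun x y z => esym (Rplus_assoc x y z)) Rplus_comm Rplus_0_l.
HB.instance Definition _ := Monoid.isComLaw.Build R R1 Rmult (fun x y z => esym (Rmult_assoc x y z)) Rmult_comm Rmult_1_l.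
HB.instance Definition _ := Monoid.isMulLaw.Build R R0 Rmult Rmult_0_l Rmult_0_r.
HB.instance Definition _ := Monoid.isAddLaw.Build R Rmult Rplus Rmult_plus_distr_r Rmult_plus_distr_l.

Lemma binom_half {s m} : (s <= m)%N -> ('C(m + m - s, m - s) * 2 ^ s <= 'C(m + m, m))%N.
Proof.
elim: s => [|s IH] Hs; first by rewrite !subn0 muln1.
have Hs' : (s <= m)%N by apply: ltnW.
apply: leq_trans (IH Hs').
have E := mul_bin_diag (m + m - s) (m - s.+1).
have e1 : (m + m - s).-1 = (m + m - s.+1)%N by rewrite subnS.
have e2 : (m - s.+1).+1 = (m - s)%N by rewrite subnS prednK // subn_gt0.
rewrite e1 e2 in E.
rewrite expnS mulnA; apply: leq_mul => //.
have Hk : (0 < m - s)%N by rewrite subn_gt0.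
rewrite -(leq_pmul2l Hk) mulnA -E.
rewrite mulnAC; apply: leq_mul => //.
lia.
Qed.

Lemma setDUK' (T : finType) (S H : {set T}) : S \subset H -> (H :\: S) :|: S = H.
Proof.
move=> sH; apply/setP => x; rewrite !inE.
case Sx: (x \in S) => /=; last by rewrite orbF.
by rewrite (subsetP sH x Sx).
Qed.

Lemma card_sup (d m : nat) (S : {set 'I_d}) : d = (m + m)%N ->
  (#|[set H : {set 'I_d} | (#|H| == m) && (S \subset H)]| * 2 ^ #|S| <= 'C(d, m))%N.
Proof.
move=> Hd.
set N := [set H : {set 'I_d} | _].
have [Hsm|Hsm] := leqP #|S| m; last first.
  suff -> : N = set0 by rewrite cards0.
  apply/setP => H; rewrite !inE; apply/negbTE/negP => /andP[/eqP HH /subset_leq_card].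
  by rewrite HH leqNgt Hsm.
apply: leq_trans (_ : 'C(d - #|S|, m - #|S|) * 2 ^ #|S| <= _)%N; last by move: (binom_half Hsm) => /=; rewrite -Hd.
apply: leq_mul => //.
have inj : {in N &, injective (fun H => H :\: S)}.
  move=> H1 H2; rewrite !inE => /andP[_ s1] /andP[_ s2] E.
  by rewrite -(setDUK' _ _ _ s1) -(setDUK' _ _ _ s2) E.
rewrite -(card_in_imset inj).
have -> : (d - #|S| = #|~: S|)%N by move: (cardsC S); rewrite card_ord; lia.
rewrite -cards_draws; apply: subset_leq_card; apply/subsetP => B /imsetP[H].
rewrite !inE => /andP[/eqP HH sH] ->.
rewrite cardsD (setIidPr sH) HH eqxx andbT.
by apply/subsetP => x; rewrite !inE => /andP[].
Qed.

Lemma INR_muln a b : INR (a * b)%N = INR a * INR b.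
Proof. by rewrite -multE mult_INR. Qed.

Lemma INR_addn a b : INR (a + b)%N = INR a + INR b.
Proof. by rewrite -plusE plus_INR. Qed.

Lemma INR_expn a b : INR (a ^ b)%N = INR a ^ b.
Proof. elim: b => [|b IH]; first by rewrite expn0. by rewrite expnS INR_muln IH. Qed.

Lemma iter_plus k c : iter k (Rplus c) R0 = INR k * c.
Proof. elim: k => [|k IH]; first by rewrite /=; ring. rewrite iterS IH S_INR; ring. Qed.

Lemma iter_mult k c : iter k (Rmult c) R1 = c ^ k.
Proof. elim: k => [|k IH] //=. by rewrite IH. Qed.

Lemma sum_const (T : finType) (A : {pred T}) c : \big[Rplus/R0]_(x in A) c = INR #|A| * c.
Proof. by rewrite big_const iter_plus. Qed.

Lemma prod_const (T : finType) (A : {pred T}) c : \big[Rmult/R1]_(x in A) c = c ^ #|A|.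
Proof. by rewrite big_const iter_mult. Qed.

Lemma sum_le (I : Type) (r : seq I) (P : pred I) (F G : I -> R) :
  (forall i, P i -> F i <= G i) -> \big[Rplus/R0]_(i <- r | P i) F i <= \big[Rplus/R0]_(i <- r | P i) G i.
Proof. move=> H; apply: (big_ind2 Rle) => //; [lra | move=> *; lra]. Qed.

Lemma sum_ge0 (I : Type) (r : seq I) (P : pred I) (F : I -> R) :
  (forall i, P i -> 0 <= F i) -> 0 <= \big[Rplus/R0]_(i <- r | P i) F i.
Proof. move=> H; apply: (big_ind (fun x => 0 <= x)) => //; [lra | move=> *; lra]. Qed.

Lemma prod_ge0 (I : Type) (r : seq I) (P : pred I) (F : I -> R) :
  (forall i, P i -> 0 <= F i) -> 0 <= \big[Rmult/R1]_(i <- r | P i) F i.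
Proof. move=> H; apply: (big_ind (fun x => 0 <= x)) => //; [lra | move=> *; nra]. Qed.

Lemma prod_le (I : Type) (r : seq I) (P : pred I) (F G : I -> R) :
  (forall i, P i -> 0 <= F i <= G i) -> \big[Rmult/R1]_(i <- r | P i) F i <= \big[Rmult/R1]_(i <- r | P i) G i.
Proof.
move=> H.
suff : 0 <= \big[Rmult/R1]_(i <- r | P i) F i <= \big[Rmult/R1]_(i <- r | P i) G i by case.
apply: (big_ind2 (fun a b => 0 <= a <= b)) => //; first lra.
move=> a b c e [h1 h2] [h3 h4]; split; nra.
Qed.

Lemma mgf (d m : nat) (u : 'I_d -> R) : d = (m + m)%N -> (forall x, 0 <= u x) ->
  \big[Rplus/R0]_(H in [set H : {set 'I_d} | #|H| == m]) \big[Rmult/R1]_(x in H) (1 + u x)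
   <= INR 'C(d, m) * \big[Rmult/R1]_x (1 + u x / 2).
Proof.
move=> Hd Hu.
pose F := fun (H : {set 'I_d}) x (j : bool) => if j then (if x \in H then u x else 0) else 1.
pose G := fun x (j : bool) => if j then u x / 2 else 1.
have step1 : forall H : {set 'I_d}, \big[Rmult/R1]_(x in H) (1 + u x) =
    \big[Rplus/R0]_(f : {ffun 'I_d -> bool}) \big[Rmult/R1]_x F H x (f x).
  move=> H; rewrite -bigA_distr_bigA big_mkcond /=; apply: eq_bigr => x _.
  rewrite big_bool /F; case: (x \in H) => /=; ring.
have step2 : \big[Rmult/R1]_x (1 + u x / 2) =
    \big[Rplus/R0]_(f : {ffun 'I_d -> bool}) \big[Rmult/R1]_x G x (f x).
  rewrite -bigA_distr_bigA; apply: eq_bigr => x _.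
  rewrite big_bool /G /=; ring.
rewrite (eq_bigr _ (fun H _ => step1 H)) exchange_big /= step2 big_distrr /=.
apply: sum_le => f _.
pose S := [set x | f x].
pose P := \big[Rmult/R1]_x (if f x then u x else 1).
have P0 : 0 <= P by apply: prod_ge0 => x _; case: (f x) => //; lra.
have e1 : forall H : {set 'I_d}, \big[Rmult/R1]_x F H x (f x) = if S \subset H then P else 0.
  move=> H; case: (boolP (S \subset H)) => sH.
    apply: eq_bigr => x _; rewrite /F; case fx: (f x) => //.
    by rewrite (subsetP sH x) // inE fx.
  case/subsetPn: sH => x; rewrite inE => fx xH.
  by rewrite (bigD1 x) //= /F fx (negbTE xH) Rmult_0_l.
rewrite (eq_bigr _ (fun H _ => e1 H)) -big_mkcondr.
have -> : \big[Rplus/R0]_(i in [set H : {set 'I_d} | #|H| == m] | S \subset i) P =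
   \big[Rplus/R0]_(i in [set H : {set 'I_d} | (#|H| == m) && (S \subset H)]) P.
  by apply: eq_bigl => H; rewrite !inE.
rewrite sum_const.
have e2 : \big[Rmult/R1]_x G x (f x) = (/ 2) ^ #|S| * P.
  rewrite /P -prod_const.
  have -> : \big[Rmult/R1]_(x in S) (/ 2) = \big[Rmult/R1]_x (if f x then / 2 else 1).
    by rewrite big_mkcond; apply: eq_bigr => x _; rewrite inE.
  rewrite -big_split /=; apply: eq_bigr => x _; rewrite /G; case: (f x) => /=; field.
rewrite e2 -Rmult_assoc; apply: Rmult_le_compat_r => //.
have := @card_sup d m S Hd.
move/leP/le_INR; rewrite INR_muln INR_expn => h.
have h2 : 0 < 2 ^ #|S| by apply: pow_lt; lra.
rewrite -Rinv_pow; last lra.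
apply: (Rmult_le_reg_r (2 ^ #|S|)) => //.
rewrite Rmult_assoc Rinv_l; last lra.
rewrite Rmult_1_r. move: h; have -> : INR 2 = 2 by []. done.
Qed.

Lemma half_exp (z : R) : 0 <= z -> 1 + (exp z - 1) / 2 <= exp (z / 2 + z ^ 2 / 4).
Proof.
move=> Hz.
have h := cosh_le (z / 2) ltac:(lra).
have e1 : exp (z / 2) * exp (z / 2) = exp z by rewrite -exp_plus; f_equal; field.
have e2 : exp (z / 2) * exp (- (z / 2)) = 1 by rewrite -exp_plus -exp_0; f_equal; ring.
have e3 : exp (z / 2 + z ^ 2 / 4) = exp (z / 2) * exp ((z / 2) ^ 2).
  by rewrite -exp_plus; f_equal; field.
rewrite e3.
have hp := exp_pos (z / 2).
apply: Rle_trans (_ : exp (z / 2) * ((exp (z / 2) + exp (- (z / 2))) / 2) <= _).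
  nra.
by apply: Rmult_le_compat_l; lra.
Qed.

Lemma asboolE (P : Prop) : asbool P = true <-> P.
Proof. rewrite /asbool; case: excluded_middle_informative => //. Qed.

Lemma exp_sum (I : Type) (r : seq I) (P : pred I) (F : I -> R) :
  exp (\big[Rplus/R0]_(i <- r | P i) F i) = \big[Rmult/R1]_(i <- r | P i) exp (F i).
Proof. apply: (big_morph exp) => //; [exact: exp_plus | exact: exp_0]. Qed.

Lemma tail (d m : nat) (b : 'I_d -> R) (w lam s : R) : d = (m + m)%N ->
  (forall x, 0 <= b x <= w) -> 0 <= lam ->
  INR #|[set H : {set 'I_d} | (#|H| == m) &&
      asbool (\big[Rplus/R0]_(x in H) b x - \big[Rplus/R0]_x b x / 2 > s)]|
   <= INR 'C(d, m) * exp (- lam * s + INR d * lam ^ 2 * w ^ 2 / 4).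
Proof.
move=> Hd Hb Hl.
set A := [set H : {set 'I_d} | _].
set Half := [set H : {set 'I_d} | #|H| == m].
set Sb := \big[Rplus/R0]_x b x.
pose M := fun H : {set 'I_d} => exp (lam * \big[Rplus/R0]_(x in H) b x).
have M0 : forall H, 0 <= M H by move=> H; apply: Rlt_le; apply: exp_pos.
have s1 : \big[Rplus/R0]_(H in Half) M H <= INR 'C(d, m) * \big[Rmult/R1]_x (1 + (exp (lam * b x) - 1) / 2).
  have -> : \big[Rplus/R0]_(H in Half) M H =
      \big[Rplus/R0]_(H in Half) \big[Rmult/R1]_(x in H) (1 + (exp (lam * b x) - 1)).
    apply: eq_bigr => H _; rewrite /M big_distrr /= exp_sum; apply: eq_bigr => x _; ring.
  apply: mgf => // x.
  have := exp_ineq1_le (lam * b x); have := Hb x; nra.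
have s2 : \big[Rmult/R1]_x (1 + (exp (lam * b x) - 1) / 2) <=
     exp (lam * Sb / 2 + INR d * (lam ^ 2 * w ^ 2 / 4)).
  apply: (@Rle_trans _ (\big[Rmult/R1]_(x : 'I_d) exp (lam * b x / 2 + lam ^ 2 * w ^ 2 / 4))).
    apply: prod_le => x _; split.
      have := exp_ineq1_le (lam * b x); have := Hb x; nra.
    apply: (Rle_trans _ _ _ (half_exp (lam * b x) ltac:(have := Hb x; nra))).
    apply: exp_le.
    have := Hb x => hb.
    have : (lam * b x) ^ 2 <= lam ^ 2 * w ^ 2.
      rewrite Rpow_mult_distr. apply: Rmult_le_compat_l; first nra.
      apply: pow_incr; lra.
    lra.
  rewrite -exp_sum; apply: exp_le; right.
  rewrite big_split /=.
  have -> : \big[Rplus/R0]_(i < d) (lam * b i / 2) = lam / 2 * Sb.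
    by rewrite /Sb big_distrr; apply: eq_bigr => i _ /=; field.
  rewrite big_const_ord iter_plus; field.
have s3 : INR #|A| * exp (lam * (Sb / 2 + s)) <= \big[Rplus/R0]_(H in Half) M H.
  rewrite -sum_const.
  apply: (@Rle_trans _ (\big[Rplus/R0]_(H in A) M H)).
    apply: sum_le => H; rewrite inE => /andP[_ /asboolE h].
    apply: exp_le; rewrite -/Sb in h; nra.
  rewrite big_mkcond [X in _ <= X]big_mkcond /=; apply: sum_le => H _.
  case HA: (H \in A); last by case: (H \in Half); [apply: M0 | right].
  by move: HA; rewrite !inE => /andP[-> _]; lra.
have ep := exp_pos (lam * (Sb / 2 + s)).
have e : exp (- lam * s + INR d * lam ^ 2 * w ^ 2 / 4) * exp (lam * (Sb / 2 + s)) =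
   exp (lam * Sb / 2 + INR d * (lam ^ 2 * w ^ 2 / 4)).
  rewrite -exp_plus; f_equal; field.
apply: (Rmult_le_reg_r _ _ _ ep).
rewrite Rmult_assoc e.
have hC : 0 <= INR 'C(d, m) by apply: pos_INR.
have : \big[Rmult/R1]_x (1 + (exp (lam * b x) - 1) / 2) * INR 'C(d, m) <=
     exp (lam * Sb / 2 + INR d * (lam ^ 2 * w ^ 2 / 4)) * INR 'C(d, m).
  by apply: Rmult_le_compat_r.
lra.
Qed.

Lemma ex_min (T : finType) (f : T -> R) (x1 : T) : exists x0, forall x, f x0 <= f x.
Proof.
suff : forall s : seq T, exists x0, forall x, x \in s -> f x0 <= f x.
  by case/(_ (enum T)) => x0 H; exists x0 => x; apply: H; rewrite mem_enum.
elim => [|y s [x0 IH]]; first by exists x1.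
case: (Rle_dec (f y) (f x0)) => h.
  exists y => x; rewrite in_cons => /orP[/eqP -> | xs]; first lra.
  have := IH x xs; lra.
exists x0 => x; rewrite in_cons => /orP[/eqP -> | xs]; first lra.
exact: IH.
Qed.

Lemma ln_le_sub1 (x : R) : 0 < x -> ln x <= x - 1.
Proof. move=> hx; have := exp_ineq1_le (ln x); rewrite exp_ln //; lra. Qed.

Lemma sum_sub_const (T : finType) (A : {pred T}) (f : T -> R) c :
  \big[Rplus/R0]_(x in A) (f x - c) = \big[Rplus/R0]_(x in A) f x - INR #|A| * c.
Proof.
rewrite (eq_bigr (fun x => f x + - c)) //.
rewrite big_split /= sum_const; ring.
Qed.

Lemma sum_opp (I : Type) (r : seq I) (P : pred I) (F : I -> R) :
  \big[Rplus/R0]_(i <- r | P i) (- F i) = - \big[Rplus/R0]_(i <- r | P i) F i.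
Proof. symmetry; apply: (big_morph Ropp) => //; [move=> a b; ring | ring]. Qed.

Lemma sum_sub_const_full (n : nat) (f : 'I_n -> R) c :
  \big[Rplus/R0]_(x < n) (f x - c) = \big[Rplus/R0]_(x < n) f x - INR n * c.
Proof.
rewrite (eq_bigr (fun x => f x + - c)) //.
rewrite big_split /= big_const_ord iter_plus; ring.
Qed.

Lemma leak_count (eps : R) (d m : nat) (Y : finType) (Rz : randomizer d Y) (y : Y) (L : R) :
  0 < eps -> d = (m + m)%N -> (0 < m)%N -> (forall x, 0 <= Rz x y) ->
  (forall x x', Rz x y <= exp eps * Rz x' y) -> 0 <= L ->
  INR d > 4 * (exp (2 * eps) - 1) ^ 2 * L ->
  INR #|[set H : {set 'I_d} | (#|H| == m) &&
     asbool (leaky ((exp (2 * eps) - 1) * sqrt (4 / INR d * L)) Rz H y)]|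
   <= 2 * INR 'C(d, m) * exp (- L).
Proof.
move=> Heps Hd Hm Hnn Hpriv HL Hdl.
have hC : 0 <= INR 'C(d, m) by apply: pos_INR.
have hE : 0 < exp (- L) by apply: exp_pos.
set p := fun x => Rz x y.
set P := \big[Rplus/R0]_x p x.
have P0 : 0 <= P by apply: sum_ge0 => x _; apply: Hnn.
have hmR : 0 < INR m by apply: lt_0_INR; apply/ltP.
have hdR : INR d = 2 * INR m by rewrite Hd INR_addn; ring.
case: (Req_dec P 0) => HP.
  have -> : [set H : {set 'I_d} | (#|H| == m) &&
     asbool (leaky ((exp (2 * eps) - 1) * sqrt (4 / INR d * L)) Rz H y)] = set0.
    apply/setP => H; rewrite !inE; apply/negbTE/negP => /andP[_ /asboolE [h _]].
    by apply: h; rewrite /prob_U -/p; change (/ INR d * P = 0); rewrite HP; ring.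
  rewrite cards0; change (INR 0) with 0; have := Rmult_le_pos _ _ hC (Rlt_le _ _ hE); lra.
have HPp : 0 < P by lra.
have [x0 Hx0] : exists x0, forall x, p x0 <= p x.
  apply: ex_min; apply: (@Ordinal d 0); rewrite Hd; lia.
set a := p x0.
have ha0 : 0 <= a by apply: Hnn.
have eps1 : 1 < exp eps by rewrite -exp_0; apply: exp_increasing.
have Pa : INR d * a <= P.
  rewrite -iter_plus -[d in iter d _ _]card_ord -big_const.
  by apply: sum_le => x _; apply: Hx0.
have Pb : P <= INR d * (exp eps * a).
  rewrite -iter_plus -[d in iter d _ _]card_ord -big_const.
  by apply: sum_le => x _; apply: Hpriv.
have hdpos : 0 < INR d by lra.
have ha : 0 < a.
  case: ha0 => // ha0; rewrite -ha0 in Pb; nra.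
set w := (exp eps - 1) * a.
have hw : 0 < w by rewrite /w; nra.
pose b := fun x => p x - a.
pose b' := fun x => w - b x.
have hb : forall x, 0 <= b x <= w.
  move=> x; rewrite /b /w; have h1 : a <= p x := Hx0 x; have h2 : p x <= exp eps * a := Hpriv x x0; lra.
have hb' : forall x, 0 <= b' x <= w by move=> x; rewrite /b'; have := hb x; lra.
set c := exp (2 * eps) - 1.
have Hdl2 : INR d > 4 * c ^ 2 * L := Hdl.
have hc : c = (exp eps - 1) * (exp eps + 1).
  rewrite /c (_ : 2 * eps = eps + eps); last ring. rewrite exp_plus; ring.
have cpos : 0 < c by rewrite hc; nra.
have hq0 : 0 <= 4 / INR d * L by apply: Rmult_le_pos => //; apply: Rlt_le; apply: Rdiv_lt_0_compat; lra.
set q := sqrt (4 / INR d * L).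
have hq : 0 <= q by apply: sqrt_pos.
have hq2 : q * q = 4 / INR d * L by apply: sqrt_sqrt.
set v := c * q.
have hv0 : 0 <= v by rewrite /v; nra.
have hv1 : v < 1.
  have : v * v < 1.
    rewrite /v (_ : c * q * (c * q) = c * c * (q * q)); last ring.
    rewrite hq2.
    apply: (Rmult_lt_reg_r (INR d)) => //.
    rewrite (_ : c * c * (4 / INR d * L) * INR d = 4 * c ^ 2 * L); last by field; lra.
    lra.
  nra.
set s := v * P / 4.
have hs : 0 <= s by rewrite /s; nra.
set lam := 2 * s / (INR d * w ^ 2).
have hlam : 0 <= lam.
  rewrite /lam; apply: Rmult_le_pos; first lra.
  apply: Rlt_le; apply: Rinv_0_lt_compat; by apply: Rmult_lt_0_compat => //; apply: pow_lt.
have ebound : INR 'C(d, m) * exp (- lam * s + INR d * lam ^ 2 * w ^ 2 / 4) <= INR 'C(d, m) * exp (- L).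
  apply: Rmult_le_compat_l => //; apply: exp_le.
  have e1 : - lam * s + INR d * lam ^ 2 * w ^ 2 / 4 = - (s * s / (INR d * w ^ 2)).
    rewrite /lam; field; split; lra.
  rewrite e1.
  set K := c * P / (INR d * w).
  have e2 : s * s / (INR d * w ^ 2) = L * (K * K) / 4.
    rewrite /K /s /v. replace (c * q * P / 4 * (c * q * P / 4)) with (c * c * (q * q) * P * P / 16) by field.
    rewrite hq2; field; split; lra.
  have hK : 2 <= K.
    have -> : K = (exp eps + 1) * (P / (INR d * a)).
      rewrite /K hc /w; field; split; [lra | split; lra].
    have : 1 <= P / (INR d * a).
      apply: (Rmult_le_reg_r (INR d * a)); first nra.
      rewrite /Rdiv Rmult_assoc Rinv_l; nra.
    nra.
  rewrite e2. have hKK : 4 <= K * K by nra. have := Rmult_le_compat_l L _ _ HL hKK. lra.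
set A1 := [set H : {set 'I_d} | (#|H| == m) &&
      asbool (\big[Rplus/R0]_(x in H) b x - \big[Rplus/R0]_x b x / 2 > s)].
set A2 := [set H : {set 'I_d} | (#|H| == m) &&
      asbool (\big[Rplus/R0]_(x in H) b' x - \big[Rplus/R0]_x b' x / 2 > s)].
have T1 := @tail d m b w lam s Hd hb hlam.
have T2 := @tail d m b' w lam s Hd hb' hlam.
rewrite -/A1 in T1; rewrite -/A2 in T2.
have sub : [set H : {set 'I_d} | (#|H| == m) &&
     asbool (leaky v Rz H y)] \subset A1 :|: A2.
  apply/subsetP => H; rewrite !inE => /andP[/eqP HH /asboolE [hU hl]].
  rewrite HH eqxx /=.
  set SH := \big[Rplus/R0]_(x in H) p x.
  set D := SH - P / 2.
  have eD1 : \big[Rplus/R0]_(x in H) b x - \big[Rplus/R0]_x b x / 2 = D.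
    rewrite /b sum_sub_const sum_sub_const_full HH /D -/SH -/P hdR; field.
  have eD2 : \big[Rplus/R0]_(x in H) b' x - \big[Rplus/R0]_x b' x / 2 = - D.
    rewrite /b' (eq_bigr (fun x => - (b x - w))); last by move=> x _; ring.
    rewrite [X in _ - X / 2](eq_bigr (fun x => - (b x - w))); last by move=> x _; ring.
    rewrite !sum_opp sum_sub_const sum_sub_const_full HH.
    rewrite -eD1 hdR. set U1 := \big[Rplus/R0]_(x : 'I_d) b x. set U2 := \big[Rplus/R0]_(x in H) b x. field.
  rewrite eD1 eD2.
  apply/orP; apply: NNPP => hn.
  have h1 : D <= s by apply: Rnot_lt_le => h; apply: hn; left; apply/asboolE.
  have h2 : - D <= s by apply: Rnot_lt_le => h; apply: hn; right; apply/asboolE.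
  apply: (Rlt_irrefl v); apply: Rlt_le_trans hl _.
  have eUH : prob_UH Rz H y = / INR m * SH by rewrite /prob_UH HH.
  have eU : prob_U Rz y = / INR d * P by [].
  set r := prob_UH Rz H y / prob_U Rz y.
  have er : r = 1 + 2 * D / P.
    rewrite /r eUH eU /D hdR; field; split; lra.
  have hr1 : 1 - v / 2 <= r.
    rewrite er; apply: (Rplus_le_reg_r (- 1)).
    rewrite (_ : 1 + 2 * D / P + -1 = 2 * D / P); last ring.
    apply: (Rmult_le_reg_r P) => //.
    rewrite (_ : 2 * D / P * P = 2 * D); last by field; lra.
    rewrite /s in h2; nra.
  have hr2 : r <= 1 + v / 2.
    rewrite er.
    apply: (Rplus_le_reg_r (- 1)).
    rewrite (_ : 1 + 2 * D / P + -1 = 2 * D / P); last ring.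
    apply: (Rmult_le_reg_r P) => //.
    rewrite (_ : 2 * D / P * P = 2 * D); last by field; lra.
    rewrite /s in h1; nra.
  have hr0 : 0 < r by lra.
  apply: Rabs_le; split.
    have := ln_le_sub1 (/ r) (Rinv_0_lt_compat _ hr0).
    rewrite ln_Rinv //.
    have : / r <= 1 + v.
      apply: (Rmult_le_reg_r r) => //.
      rewrite Rinv_l; last lra.
      nra.
    lra.
  have := ln_le_sub1 r hr0; lra.
apply: (Rle_trans _ (INR #|A1 :|: A2|)).
  by apply: le_INR; apply/leP; apply: subset_leq_card.
apply: (Rle_trans _ (INR #|A1| + INR #|A2|)).
  rewrite -INR_addn; apply: le_INR; apply/leP.
  by rewrite cardsU; lia.
lra.
Qed.

Lemma card_bigcup_le (I T : finType) (r : seq I) (P : pred I) (F : I -> {set T}) :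
  (#|\bigcup_(i <- r | P i) F i| <= \sum_(i <- r | P i) #|F i|)%N.
Proof.
apply: (big_ind2 (fun (X : {set T}) n => #|X| <= n)%N) => //; first by rewrite cards0.
move=> X1 n1 X2 n2 h1 h2; rewrite cardsU; lia.
Qed.

Lemma INR_sum (I : Type) (r : seq I) (P : pred I) (F : I -> nat) :
  INR (\sum_(i <- r | P i) F i)%N = \big[Rplus/R0]_(i <- r | P i) INR (F i).
Proof. apply: (big_morph INR) => //; exact: INR_addn. Qed.

Theorem mainTheorem5 (eps : R) (d n : nat) (Y : finType)
  (Rs : 'I_n -> randomizer d Y) :
  (0 < eps) ->
  (forall i, is_randomizer (Rs i)) ->
  (forall i, eps_private eps (Rs i)) ->
  ~~ odd d ->
  (INR d > 4 * (exp (2 * eps) - 1) ^ 2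
             * ln (12 * INR #|Y| * INR (num_distinct Rs))) ->
  (prob_half_subsets (fun H : {set 'I_d} =>
     forall (y : Y) (i : 'I_n),
       ~ leaky ((exp (2 * eps) - 1)
                  * sqrt (4 / INR d * ln (12 * INR #|Y| * INR (num_distinct Rs))))
               (Rs i) H y)
   >= 5 / 6).
Proof.
move=> Heps Hrz Hpriv Hev Hdl.
set k := num_distinct Rs.
set L := ln (12 * INR #|Y| * INR k).
set v := (exp (2 * eps) - 1) * sqrt (4 / INR d * L).
rewrite /prob_half_subsets.
set m := d./2.
have Hd : d = (m + m)%N.
  by rewrite addnn -[LHS]odd_double_half (negbTE Hev).
set Pg := fun H : {set 'I_d} => forall (y : Y) (i : 'I_n), ~ leaky v (Rs i) H y.
set Half := [set H : {set 'I_d} | #|H| == m].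
set Good := [set H : {set 'I_d} | (#|H| == m) && asbool (Pg H)].
set Bad := [set H : {set 'I_d} | (#|H| == m) && ~~ asbool (Pg H)].
have hHalf : #|Half| = 'C(d, m) by rewrite /Half card_draws card_ord.
have hC : (0 < 'C(d, m))%N by rewrite bin_gt0 Hd leq_addl.
have hCR : 0 < INR 'C(d, m) by apply: lt_0_INR; apply/ltP.
have hsplit : (#|Half| <= #|Good| + #|Bad|)%N.
  apply: leq_trans (_ : #|Good :|: Bad| <= _)%N; last by rewrite cardsU; lia.
  apply: subset_leq_card; apply/subsetP => H; rewrite !inE => ->.
  by case: (asbool (Pg H)).
set Dset := [set i : 'I_n | [forall j : 'I_n, (j < i)%N ==> ~~ asbool (Rs j = Rs i)]].
have hk : k = #|Dset| by [].
pose B := fun (j : 'I_n) (y : Y) => [set H : {set 'I_d} | (#|H| == m) && asbool (leaky v (Rs j) H y)].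
have subB : Bad \subset \bigcup_(j in Dset) \bigcup_(y : Y) B j y.
  apply/subsetP => H; rewrite inE => /andP[hm hng].
  have : ~ Pg H by move=> hp; move: hng; have -> : asbool (Pg H) = true by apply/asboolE.
  move=> /not_all_ex_not [y /not_all_ex_not [i /NNPP hl]].
  have Pi : asbool (Rs i = Rs i) by apply/asboolE.
  case: (@arg_minnP _ i (fun j : 'I_n => asbool (Rs j = Rs i)) (fun j : 'I_n => nat_of_ord j) Pi) => j /asboolE Hj Hmin.
  apply/bigcupP; exists j.
    rewrite inE; apply/forallP => j'; apply/implyP => hj'; apply/negP => /asboolE e.
    have : asbool (Rs j' = Rs i) by apply/asboolE; rewrite e.
    move/Hmin; rewrite leqNgt hj' //.
  apply/bigcupP; exists y => //.
  by rewrite inE hm /=; apply/asboolE; rewrite Hj.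
have hBad : INR #|Bad| <= INR 'C(d, m) / 6.
  apply: (Rle_trans _ (INR (\sum_(j in Dset) \sum_(y : Y) #|B j y|)%N)).
    apply: le_INR; apply/leP.
    apply: (leq_trans (subset_leq_card subB)).
    apply: (leq_trans (card_bigcup_le _ _ _ _ _)).
    apply: leq_sum => j _; exact: card_bigcup_le.
  rewrite INR_sum.
  set c0 := INR 'C(d, m) / (6 * INR #|Y| * INR k).
  apply: (Rle_trans _ (\big[Rplus/R0]_(j in Dset) \big[Rplus/R0]_(y : Y) c0)).
    apply: sum_le => j jD; rewrite INR_sum; apply: sum_le => y _.
    have hY : (0 < #|Y|)%N by apply/card_gt0P; exists y.
    have hk1 : (0 < k)%N by rewrite hk; apply/card_gt0P; exists j.
    have hYR : 1 <= INR #|Y| by apply: (le_INR 1); apply/leP.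
    have hkR : 1 <= INR k by apply: (le_INR 1); apply/leP.
    have hX : 0 < 12 * INR #|Y| * INR k by nra.
    have hL : 0 < L.
      rewrite /L -ln_1; apply: ln_increasing; [lra | nra].
    have hcL : 0 <= 4 * (exp (2 * eps) - 1) ^ 2 * L.
      apply: Rmult_le_pos; last lra. apply: Rmult_le_pos; [lra | apply: pow2_ge_0].
    have hm : (0 < m)%N.
      have : 0 < INR d by rewrite -/L in Hdl; lra.
      change 0 with (INR 0) => /INR_lt /ltP; rewrite Hd; lia.
    have := @leak_count eps d m Y (Rs j) y L Heps Hd hm.
    move=> /(_ (fun x => proj1 (Hrz j) x y)).
    have hp : forall x x', Rs j x y <= exp eps * Rs j x' y.
      move=> x x'; have := Hpriv j x x' [set y]; rewrite /prob_in !big_set1 //.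
    move=> /(_ hp (Rlt_le _ _ hL) Hdl).
    have -> : exp (- L) = / (12 * INR #|Y| * INR k).
      by rewrite exp_Ropp /L exp_ln.
    rewrite /c0; move=> h; apply: (Rle_trans _ _ _ h); right; field; lra.
  rewrite sum_const.
  have -> : \big[Rplus/R0]_(y : Y) c0 = INR #|Y| * c0.
    by rewrite -big_enum big_const_seq count_predT -cardE iter_plus.
  rewrite -hk /c0.
  have hY0 : 0 <= INR #|Y| by apply: pos_INR.
  have hk0 : 0 <= INR k by apply: pos_INR.
  case: (Req_dec (INR #|Y| * INR k) 0) => h0.
    rewrite (_ : INR k * (INR #|Y| * (INR 'C(d, m) / (6 * INR #|Y| * INR k))) =
       (INR #|Y| * INR k) * (INR 'C(d, m) / (6 * INR #|Y| * INR k))); last ring.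
    rewrite h0 Rmult_0_l; lra.
  have hY1 : INR #|Y| <> 0 by move=> e; apply: h0; rewrite e; ring.
  have hk1 : INR k <> 0 by move=> e; apply: h0; rewrite e; ring.
  right; field; split; lra.
have h1 : INR #|Half| <= INR #|Good| + INR #|Bad|.
  by rewrite -INR_addn; apply: le_INR; apply/leP.
rewrite hHalf in h1 *.
apply: Rle_ge.
apply: (Rmult_le_reg_r (INR 'C(d, m))) => //.
rewrite (_ : INR #|Good| / INR 'C(d, m) * INR 'C(d, m) = INR #|Good|); [lra | field; lra].
Qed.
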